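(* Let $p:\widetilde G\to G$ be a two-fold cover and $\tilde g\in\widetilde G$ semisimple. Then (1) $p(\mathcal O(\widetilde G,\tilde g))=\mathcal O(G,p(\tilde g))$; (2) $p^{-1}(\mathcal O(G,p(\tilde g)))=\mathcal O(\widetilde G,\tilde g)\cup\mathcal O(\widetilde G,-\tilde g)$; (3) if $\tilde g$ is strongly regular and relevant, then $\mathcal O(\widetilde G,\tilde g)\neq\mathcal O(\widetilde G,-\tilde g)$.
   Context: $G$ is the group of real points of a connected reductive complex algebraic group, and $p$ has kernel identified with $\{\pm1\}$. $\mathcal O(X,x)$ denotes the $X$-conjugacy class of $x$. $\tilde g$ is strongly regular if $p(\tilde g)$ is semisimple with centralizer in $G(\mathbb C)$ a maximal torus; then $H=\mathrm{Cent}_G(p(\tilde g))$ is a Cartan subgroup. A strongly regular semisimple $\tilde g$ is relevant if $\tilde g\in Z(p^{-1}(H))$ for $H=\mathrm{Cent}_G(p(\tilde g))$. *)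

(* Defs.v *)
Set Implicit Arguments.

Record group := Group {
  carrier :> Type;
  gmul : carrier -> carrier -> carrier;
  ginv : carrier -> carrier;
  gone : carrier;
  gmulA : forall x y z, gmul x (gmul y z) = gmul (gmul x y) z;
  gmul1 : forall x, gmul gone x = x;
  gmulV : forall x, gmul (ginv x) x = gone
}.

Arguments gmul {g} _ _.
Arguments ginv {g} _.
Arguments gone {g}.

(** A two-fold cover p : Gt -> G, group-theoretically: a surjective
    homomorphism whose kernel is {1, m} with m <> 1; m plays the role of -1. *)
Record two_fold_cover (Gt G : group) := TwoFoldCover {
  cov :> Gt -> G;
  minus_one : Gt;
  cov_mul : forall x y, cov (gmul x y) = gmul (cov x) (cov y);
  cov_surj : forall y, exists x, cov x = y;
  minus_one_neq : minus_one <> gone;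
  cov_minus_one : cov minus_one = gone;
  cov_ker : forall x, cov x = gone -> x = gone \/ x = minus_one
}.

Definition neg {Gt G : group} (p : two_fold_cover Gt G) (x : Gt) : Gt :=
  gmul (minus_one p) x.

Definition conj_class {X : group} (x : X) : X -> Prop :=
  fun y => exists h : X, y = gmul (gmul h x) (ginv h).

Definition centralizer {G : group} (g : G) : G -> Prop :=
  fun h => gmul h g = gmul g h.

Definition in_center_preimage {Gt G : group} (p : two_fold_cover Gt G)
  (H : G -> Prop) (g : Gt) : Prop :=
  H (p g) /\ forall h : Gt, H (p h) -> gmul h g = gmul g h.

Definition relevant {Gt G : group} (p : two_fold_cover Gt G) (g : Gt) : Prop :=
  in_center_preimage p (centralizer (p g)) g.

(* Main.v *)
Require Import Defs.
From Stdlib Require Import Setoid.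
Arguments gmul1 {_} _.
Arguments gmulV {_} _.
Arguments gmulA {_} _ _ _.

Lemma g_mulVr {G : group} (x : G) : gmul x (ginv x) = gone.
Proof.
  rewrite <- (gmul1 (gmul x (ginv x))).
  rewrite <- (gmulV (gmul x (ginv x))) at 1.
  rewrite <- (gmulA (ginv (gmul x (ginv x)))).
  replace (gmul (gmul x (ginv x)) (gmul x (ginv x))) with (gmul x (ginv x)).
  - apply gmulV.
  - rewrite <- gmulA, (gmulA (ginv x) x (ginv x)), gmulV, gmul1. reflexivity.
Qed.

Lemma g_mulr1 {G : group} (x : G) : gmul x gone = x.
Proof. rewrite <- (gmulV x), gmulA, g_mulVr. apply gmul1. Qed.

Lemma g_rcancel {G : group} {x y a : G} : gmul x a = gmul y a -> x = y.
Proof.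
  intro H. rewrite <- (g_mulr1 x), <- (g_mulr1 y), <- (g_mulVr a), !gmulA, H. reflexivity.
Qed.

Lemma g_lcancel {G : group} {x y a : G} : gmul a x = gmul a y -> x = y.
Proof.
  intro H. rewrite <- (gmul1 x), <- (gmul1 y), <- (gmulV a), <- !gmulA, H. reflexivity.
Qed.

Lemma cov_one {Gt G : group} (p : two_fold_cover Gt G) : p gone = gone.
Proof.
  apply (g_lcancel (a := p gone)). rewrite <- cov_mul, gmul1, g_mulr1. reflexivity.
Qed.

Lemma cov_inv {Gt G : group} (p : two_fold_cover Gt G) (h : Gt) : p (ginv h) = ginv (p h).
Proof.
  apply (g_rcancel (a := p h)). rewrite <- cov_mul, !gmulV. apply cov_one.
Qed.

Lemma cov_conj {Gt G : group} (p : two_fold_cover Gt G) (h g : Gt) :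
  p (gmul (gmul h g) (ginv h)) = gmul (gmul (p h) (p g)) (ginv (p h)).
Proof. rewrite !cov_mul, cov_inv. reflexivity. Qed.

Lemma m_central {Gt G : group} (p : two_fold_cover Gt G) (h : Gt) :
  gmul h (minus_one p) = gmul (minus_one p) h.
Proof.
  destruct (cov_ker p (gmul (gmul h (minus_one p)) (ginv h))) as [E|E].
  - rewrite cov_conj, cov_minus_one, g_mulr1, g_mulVr. reflexivity.
  - exfalso. apply (minus_one_neq p).
    apply (g_lcancel (a := h)). rewrite g_mulr1.
    apply (g_rcancel (a := ginv h)). rewrite E, g_mulVr. reflexivity.
  - apply (g_rcancel (a := ginv h)). rewrite E, <- gmulA, g_mulVr, g_mulr1. reflexivity.
Qed.

Theorem mainTheorem13 (Gt G : group) (p : two_fold_cover Gt G)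
  (semisimple : G -> Prop) (strongly_regular : G -> Prop) (g : Gt)
  (Hss : semisimple (p g)) :
  (* (1) p(O(Gt, g)) = O(G, p g) *)
  (forall y : G, (exists x : Gt, conj_class g x /\ p x = y) <-> conj_class (p g) y)
  /\
  (* (2) p^{-1}(O(G, p g)) = O(Gt, g) \cup O(Gt, -g) *)
  (forall x : Gt, conj_class (p g) (p x) <-> (conj_class g x \/ conj_class (neg p g) x))
  /\
  (* (3) strongly regular and relevant => O(Gt, g) <> O(Gt, -g) *)
  (strongly_regular (p g) -> relevant p g ->
     ~ (forall x : Gt, conj_class g x <-> conj_class (neg p g) x)).
Proof.
  split; [|split].
  - intro y; split.
    + intros [x [[h Hx] Hy]]. subst. exists (p h). apply cov_conj.
    + intros [k Hk]. destruct (cov_surj p k) as [h Hh]. subst.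
      exists (gmul (gmul h g) (ginv h)). split.
      * exists h; reflexivity.
      * apply cov_conj.
  - intro x; split.
    + intros [k Hk]. destruct (cov_surj p k) as [h Hh]. subst.
      rewrite <- cov_conj in Hk.
      destruct (cov_ker p (gmul x (ginv (gmul (gmul h g) (ginv h))))) as [E|E].
      * rewrite cov_mul, cov_inv, Hk. apply g_mulVr.
      * left. exists h. apply (g_rcancel (a := ginv (gmul (gmul h g) (ginv h)))).
        rewrite E, g_mulVr. reflexivity.
      * right. exists h. unfold neg.
        assert (x = gmul (minus_one p) (gmul (gmul h g) (ginv h))) as ->.
        { apply (g_rcancel (a := ginv (gmul (gmul h g) (ginv h)))).
          rewrite E, <- gmulA, g_mulVr, g_mulr1. reflexivity. }
        rewrite !gmulA, m_central. reflexivity.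
    + intros [[h Hx]|[h Hx]]; subst; exists (p h).
      * apply cov_conj.
      * rewrite cov_conj. unfold neg. rewrite cov_mul, cov_minus_one, gmul1. reflexivity.
  - intros _ [_ Hrel] Heq.
    assert (Hr : conj_class (neg p g) (neg p g)).
    { exists gone. rewrite gmul1. apply (g_rcancel (a := gone)).
      rewrite <- gmulA, gmulV, !g_mulr1. reflexivity. }
    destruct (proj2 (Heq _) Hr) as [h Hh].
    assert (Hc : centralizer (p g) (p h)).
    { unfold centralizer. apply (g_rcancel (a := ginv (p h))).
      rewrite <- cov_conj, <- Hh. unfold neg.
      rewrite cov_mul, cov_minus_one, gmul1, <- gmulA, g_mulVr, g_mulr1. reflexivity. }
    specialize (Hrel h Hc).
    apply (minus_one_neq p). apply (g_rcancel (a := g)).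
    rewrite gmul1. fold (neg p g). rewrite Hh, Hrel, <- gmulA, g_mulVr, g_mulr1.
    reflexivity.
Qed.
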